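(* Let $p,q\in\mathbb{C}$, $N=N_1+N_2+\dots+N_s$, and let $$\Gamma=\mathrm{Diag}\big(\Gamma^{[N_1]}_D(k_1,\dots,k_{N_1}),\ \Gamma^{[N_2]}_J(\kappa_2),\ \dots,\ \Gamma^{[N_s]}_J(\kappa_s)\big)$$ (block diagonal), where all eigenvalues $\lambda,\mu$ of $\Gamma$ satisfy $\lambda+\mu\ne0$ and $p,q\notin\{\pm\lambda\}$. Let $c=(c^{(1)},c^{(2)},\dots,c^{(s)})$ be a constant row vector of length $N$, with $c^{(1)}=(c_1,\dots,c_{N_1})$ and $c^{(j)}$ of length $N_j$. Define $$r=\begin{pmatrix} r^{[N_1]}_D(k_1,\dots,k_{N_1})\\ r^{[N_2]}_J(\kappa_2)\\ \vdots\\ r^{[N_s]}_J(\kappa_s)\end{pmatrix},\qquad M=FGH,$$ with $F=\mathrm{Diag}(F^{[N_1]}_D(k_1,\dots,k_{N_1}),F^{[N_2]}_J(\kappa_2),\dots,F^{[N_s]}_J(\kappa_s))$, $H=\mathrm{Diag}(H^{[N_1]}_D(c^{(1)}),H^{[N_2]}_J(c^{(2)}),\dots,H^{[N_s]}_J(c^{(s)}))$, and $G=(G_{i,j})_{i,j=1}^s$ the symmetric block matrix with $N_i\times N_j$ blocks $$G_{1,1}=G^{[N_1]}_D(k_1,\dots,k_{N_1}),\quad G_{1,j}=G_{j,1}^T=G^{[N_1,N_j]}_{DJ}(k_1,\dots,k_{N_1};\kappa_j)\ (1<j\le s),$$ $$G_{i,j}=G_{j,i}^T=G^{[N_i,N_j]}_{JJ}(\kappa_i;\kappa_j)\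 (1<i\le j\le s).$$ Then, for all $(n,m)\in\mathbb{Z}^2$, $$(pI-\Gamma)\tilde r=(pI+\Gamma)r,\qquad (qI-\Gamma)\hat r=(qI+\Gamma)r,\qquad M\Gamma+\Gamma M=r\,c .$$ Furthermore, for $\mathcal{A}=\mathrm{Diag}(I_{N_1},\mathcal{A}_2,\dots,\mathcal{A}_s)$ with each $\mathcal{A}_j$ an arbitrary constant $N_j\times N_j$ lower triangular Toeplitz matrix, the pair $(\mathcal{A}r,\mathcal{A}M)$ also satisfies these three equations with the same $\Gamma$ and $c$.
   Context: For $f$ on $\mathbb{Z}^2$: $\tilde f(n,m)=f(n+1,m)$, $\hat f(n,m)=f(n,m+1)$. Plane wave factor: $\rho(k)=\big(\tfrac{p+k}{p-k}\big)^n\big(\tfrac{q+k}{q-k}\big)^m\rho^0$, with the constant $\rho^0$ allowed to depend on which eigenvalue/position it is attached to but not on $k$ under differentiation; write $\rho_i=\rho(k_i)$. $\Gamma^{[N_1]}_D(k_1,\dots,k_{N_1})=\mathrm{Diag}(k_1,\dots,k_{N_1})$; $r^{[N_1]}_D=(\rho_1,\dots,\rho_{N_1})^T$; $F^{[N_1]}_D=\mathrm{Diag}(\rho_1,\dots,\rho_{N_1})$; $H^{[N_1]}_D(c_1,\dots,c_{N_1})=\mathrm{Diag}(c_1,\dots,c_{N_1})$. $\Gamma^{[N]}_J(\kappa)$: $N\times N$ with $\kappa$ on the diagonal, $1$ on the subdiagonal, $0$ elsewhere. $r^{[N]}_J(\kappa)=\big(\rho,\frac{\partial_k\rho}{1!},\dots,\frac{\partial_k^{N-1}\rho}{(N-1)!}\big)^T|_{k=\kappa}$.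 $F^{[N]}_J(\kappa)$: lower triangular with $(i,j)$ entry $\frac{1}{(i-j)!}\partial_k^{i-j}\rho|_{k=\kappa}$ for $i\ge j$. $H^{[N]}_J(d_1,\dots,d_N)$: $(i,j)$ entry $d_{i+j-1}$ if $i+j-1\le N$, else $0$. $G^{[N]}_D(k_1,\dots,k_N)$: $(i,j)$ entry $\frac1{k_i+k_j}$. $G^{[N_1,N_2]}_{DJ}(k_1,\dots,k_{N_1};b)$: $N_1\times N_2$, $(i,j)$ entry $-\big(\frac{-1}{k_i+b}\big)^j$. $G^{[N_1,N_2]}_{JJ}(a;b)$: $N_1\times N_2$, $(i,j)$ entry $\binom{i+j-2}{i-1}\frac{(-1)^{i+j}}{(a+b)^{i+j-1}}$. A lower triangular Toeplitz matrix is $(a_{i-j})$ with $a_l=0$ for $l<0$. The block sizes $N_1\ge0$, $N_j\ge1$; empty blocks are omitted. *)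

(* Defs.v *)
From HB Require Import structures.
From mathcomp Require Import all_boot all_order all_algebra.
Set Implicit Arguments. Unset Strict Implicit. Unset Printing Implicit Defensive.
Import Order.TTheory GRing.Theory Num.Theory.
Local Open Scope ring_scope.

Section Defs.
Variable R : numClosedFieldType.   (* the field C of the paper, generalised *)
Variables p q : R.

Definition rho (n m : int) (rho0 : R) (k : R) : R :=
  ((p + k) / (p - k)) ^ n * ((q + k) / (q - k)) ^ m * rho0.

(* The same function as a quotient of polynomials in the variable k:        *)
(* ((a+k)/(a-k))^n = num/den.                                               *)
Definition fac (a : R) (n : int) : {poly R} * {poly R} :=
  match n with
  | Posz j => ((a%:P + 'X) ^+ j, (a%:P - 'X) ^+ j)
  | Negz j => ((a%:P - 'X) ^+ j.+1, (a%:P + 'X) ^+ j.+1)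
  end.

Definition rho_frac (n m : int) (rho0 : R) : {poly R} * {poly R} :=
  ((rho0 *: ((fac p n).1 * (fac q m).1)), (fac p n).2 * (fac q m).2).

Definition qderiv (PQ : {poly R} * {poly R}) : {poly R} * {poly R} :=
  (PQ.1^`() * PQ.2 - PQ.1 * PQ.2^`(), PQ.2 ^+ 2).

Definition drho (j : nat) (n m : int) (rho0 : R) (kap : R) : R :=
  let PQ := iter j qderiv (rho_frac n m rho0) in PQ.1.[kap] / PQ.2.[kap].

Definition trho (j : nat) (n m : int) (rho0 : R) (kap : R) : R :=
  drho j n m rho0 kap / (j`!)%:R.

Definition GammaD N1 (k : 'I_N1 -> R) : 'M[R]_N1 := diag_mx (\row_i k i).

Definition GammaJ N (kap : R) : 'M[R]_N :=
  \matrix_(i, j) (if (i : nat) == j then kap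
                  else if (i : nat) == j.+1 then 1 else 0).

Definition rD N1 (n m : int) (rho0 : 'I_N1 -> R) (k : 'I_N1 -> R) : 'cV[R]_N1 :=
  \col_i rho n m (rho0 i) (k i).

Definition rJ N (n m : int) (rho0 : R) (kap : R) : 'cV[R]_N :=
  \col_(i < N) trho i n m rho0 kap.

Definition FD N1 (n m : int) (rho0 : 'I_N1 -> R) (k : 'I_N1 -> R) : 'M[R]_N1 :=
  diag_mx (\row_i rho n m (rho0 i) (k i)).

Definition FJ N (n m : int) (rho0 : R) (kap : R) : 'M[R]_N :=
  \matrix_(i, j) (if (j <= i)%N then trho (i - j) n m rho0 kap else 0).

Definition HD N1 (c : 'rV[R]_N1) : 'M[R]_N1 := diag_mx c.

Definition HJ N (d : 'rV[R]_N) : 'M[R]_N :=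
  \matrix_(i, j) (if (i + j < N)%N then d 0 (insubd i (i + j)%N) else 0).

Definition GD N1 (k : 'I_N1 -> R) : 'M[R]_N1 :=
  \matrix_(i, j) (1 / (k i + k j)).

(* 1-indexed (i,j) entry -(-1/(k_i+b))^j ; here j is 0-indexed *)
Definition GDJ N1 N2 (k : 'I_N1 -> R) (b : R) : 'M[R]_(N1, N2) :=
  \matrix_(i, j) (- ((-1) / (k i + b)) ^+ j.+1).

(* 1-indexed (i,j) entry binom(i+j-2,i-1) (-1)^(i+j) / (a+b)^(i+j-1) *)
Definition GJJ N1 N2 (a b : R) : 'M[R]_(N1, N2) :=
  \matrix_(i, j) ('C(i + j, i)%:R * (-1) ^+ (i + j) / (a + b) ^+ (i + j).+1).

Definition ltToeplitz N (A : 'M[R]_N) : Prop :=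
  exists a : nat -> R, forall i j : 'I_N,
    A i j = if (j <= i)%N then a (i - j)%N else 0.

Variables (N1 s1 : nat) (Ns : 'I_s1 -> nat).
(* blocks: first the diagonal block of size N1, then s1 (= s - 1) Jordan
   blocks of sizes Ns j *)
Variables (k : 'I_N1 -> R) (kap : 'I_s1 -> R).
Variables (rho0D : 'I_N1 -> R) (rho0J : 'I_s1 -> R).
Variables (c1 : 'rV[R]_N1) (cJ : forall j, 'rV[R]_(Ns j)).

Local Notation N := (N1 + \sum_j Ns j)%N.

Definition Gamma : 'M[R]_N :=
  block_mx (GammaD k) 0 0 (\mxdiag_j GammaJ (Ns j) (kap j)).

Definition rvec (n m : int) : 'cV[R]_N :=
  col_mx (rD n m rho0D k) (\mxcol_j rJ (Ns j) n m (rho0J j) (kap j)).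

Definition Fmat (n m : int) : 'M[R]_N :=
  block_mx (FD n m rho0D k) 0 0 (\mxdiag_j FJ (Ns j) n m (rho0J j) (kap j)).

Definition Hmat : 'M[R]_N :=
  block_mx (HD c1) 0 0 (\mxdiag_j HJ (cJ j)).

Definition Gmat : 'M[R]_N :=
  block_mx (GD k) (\mxrow_j GDJ (Ns j) k (kap j))
           (\mxrow_j GDJ (Ns j) k (kap j))^T
           (\mxblock_(i, j) (if (i <= j)%N then GJJ (Ns i) (Ns j) (kap i) (kap j)
                             else (GJJ (Ns j) (Ns i) (kap j) (kap i))^T)).

Definition Mmat (n m : int) : 'M[R]_N := Fmat n m *m Gmat *m Hmat.

Definition cvec : 'rV[R]_N := row_mx c1 (\mxrow_j cJ j).

Definition Amat (AJ : forall j, 'M[R]_(Ns j)) : 'M[R]_N :=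
  block_mx 1%:M 0 0 (\mxdiag_j AJ j).

End Defs.

(* Main.v *)
Require Import Defs.
From HB Require Import structures.
From mathcomp Require Import all_boot all_order all_algebra.
From mathcomp Require Import ring zify.
Set Implicit Arguments. Unset Strict Implicit. Unset Printing Implicit Defensive.
Import Order.TTheory GRing.Theory Num.Theory.
Local Open Scope ring_scope.


Section PolyPart.
Variable R : numClosedFieldType.
Implicit Types (P Q A : {poly R}).

Definition Dv (j : nat) (PQ : {poly R} * {poly R}) (x : R) : R :=
  (iter j (@qderiv R) PQ).1.[x] / (iter j (@qderiv R) PQ).2.[x].

Lemma qd_den j (PQ : {poly R} * {poly R}) x :
  PQ.2.[x] != 0 -> (iter j (@qderiv R) PQ).2.[x] != 0.
Proof.
move=> h; elim: j => // j IH /=; rewrite horner_exp expf_neq0 //.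
Qed.

Lemma qd_inv j P1 Q1 P2 Q2 : P1 * Q2 = P2 * Q1 ->
  (iter j (@qderiv R) (P1, Q1)).1 * (iter j (@qderiv R) (P2, Q2)).2 =
  (iter j (@qderiv R) (P2, Q2)).1 * (iter j (@qderiv R) (P1, Q1)).2.
Proof.
move=> E; elim: j => // j /=.
case: (iter j _ (P1, Q1)) => A1 B1; case: (iter j _ (P2, Q2)) => A2 B2 /= E'.
have D := congr1 (fun x => x^`()) E'; rewrite /= !derivM in D.
apply/eqP; rewrite -subr_eq0; apply/eqP.
transitivity (B1 * B2 * ((A1^`() * B2 + A1 * B2^`()) - (A2^`() * B1 + A2 * B1^`()))
   - (B1^`() * B2 + B1 * B2^`()) * (A1 * B2 - A2 * B1)); first by ring.
by rewrite D E' !subrr ?mulr0 ?mul0r ?subrr.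
Qed.

Lemma Dv_inv j P1 Q1 P2 Q2 x : P1 * Q2 = P2 * Q1 -> Q1.[x] != 0 -> Q2.[x] != 0 ->
  Dv j (P1, Q1) x = Dv j (P2, Q2) x.
Proof.
move=> E h1 h2; rewrite /Dv.
have d1 := @qd_den j (P1, Q1) _ h1; have d2 := @qd_den j (P2, Q2) _ h2.
apply/eqP; rewrite eqr_div //; apply/eqP.
by rewrite -!hornerM qd_inv.
Qed.

Lemma qd_mulA j A P Q : A^`()^`() = 0 ->
  iter j.+1 (@qderiv R) (A * P, Q) =
  (A * (iter j.+1 (@qderiv R) (P, Q)).1 +
     (A^`() * (iter j (@qderiv R) (P, Q)).1 * (iter j (@qderiv R) (P, Q)).2) *+ j.+1,
   (iter j.+1 (@qderiv R) (P, Q)).2).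
Proof.
move=> hA; elim: j => [|j IH].
  rewrite /= /qderiv /= derivM; congr pair; ring.
rewrite iterS IH !iterS.
case: (iter j _ (P, Q)) => P0 Q0; rewrite /qderiv /=.
congr pair.
rewrite !(derivD, derivM, derivMn, derivB, expr2) hA.
ring.
Qed.

Lemma Dv_mulA j A P Q x : A^`()^`() = 0 -> Q.[x] != 0 ->
  Dv j.+1 (A * P, Q) x =
  A.[x] * Dv j.+1 (P, Q) x + j.+1%:R * A^`().[x] * Dv j (P, Q) x.
Proof.
move=> hA hQ; rewrite /Dv qd_mulA //.
have d0 := @qd_den j (P, Q) _ hQ.
rewrite [iter j.+1 _ _]/=.
move: d0; case: (iter j _ (P, Q)) => P0 Q0 /= d0.
rewrite /qderiv /= !(hornerD, hornerN, hornerM, hornerMn, horner_exp).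
field. by rewrite d0.
Qed.

Lemma Dv_mulA0 A P Q x : Dv 0 (A * P, Q) x = A.[x] * Dv 0 (P, Q) x.
Proof. by rewrite /Dv /= hornerM mulrA. Qed.

End PolyPart.

Section P2.
Variable R : numClosedFieldType.

Lemma fac_step (a : R) (n : int) :
  (a%:P - 'X) * (fac a (n + 1)).1 * (fac a n).2 =
  (a%:P + 'X) * (fac a n).1 * (fac a (n + 1)).2.
Proof.
case: n => [j|[|j]].
- have -> : Posz j + 1 = Posz j.+1 by lia.
  rewrite /= !exprS; ring.
- have -> : Negz 0 + 1 = 0 by rewrite NegzE; lia.
  rewrite /= !expr1; ring.
- have -> : Negz j.+1 + 1 = Negz j by rewrite !NegzE; lia.
  rewrite /= !exprS; ring.
Qed.

Lemma fac_den (a x : R) (n : int) : a - x != 0 -> a + x != 0 ->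
  (fac a n).2.[x] != 0.
Proof.
move=> h1 h2; case: n => j /=; rewrite horner_exp expf_neq0 //
  !(hornerD, hornerN, hornerC, hornerX) //.
Qed.

Lemma rf_den (p q x : R) n m r0 : p - x != 0 -> p + x != 0 -> q - x != 0 -> q + x != 0 ->
  (rho_frac p q n m r0).2.[x] != 0.
Proof. by move=> *; rewrite /= hornerM mulf_neq0 // fac_den. Qed.

Lemma rf_stepn (p q : R) n m r0 :
  (p%:P - 'X) * (rho_frac p q (n + 1) m r0).1 * (rho_frac p q n m r0).2 =
  (p%:P + 'X) * (rho_frac p q n m r0).1 * (rho_frac p q (n + 1) m r0).2.
Proof.
rewrite /rho_frac /= -!mul_polyC.
have E := fac_step p n.
transitivity (r0%:P * (fac q m).1 * (fac q m).2 *
   ((p%:P - 'X) * (fac p (n + 1)).1 * (fac p n).2)); first by ring.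
rewrite E; ring.
Qed.

Lemma rf_stepm (p q : R) n m r0 :
  (q%:P - 'X) * (rho_frac p q n (m + 1) r0).1 * (rho_frac p q n m r0).2 =
  (q%:P + 'X) * (rho_frac p q n m r0).1 * (rho_frac p q n (m + 1) r0).2.
Proof.
rewrite /rho_frac /= -!mul_polyC.
have E := fac_step q m.
transitivity (r0%:P * (fac p n).1 * (fac p n).2 *
   ((q%:P - 'X) * (fac q (m + 1)).1 * (fac q m).2)); first by ring.
rewrite E; ring.
Qed.

Lemma Dv_step (a x : R) (PQ1 PQ0 : {poly R} * {poly R}) :
  (a%:P - 'X) * PQ1.1 * PQ0.2 = (a%:P + 'X) * PQ0.1 * PQ1.2 ->
  PQ1.2.[x] != 0 -> PQ0.2.[x] != 0 ->
  (forall j, (a - x) * Dv j.+1 PQ1 x - j.+1%:R * Dv j PQ1 x =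
             (a + x) * Dv j.+1 PQ0 x + j.+1%:R * Dv j PQ0 x) /\
  (a - x) * Dv 0 PQ1 x = (a + x) * Dv 0 PQ0 x.
Proof.
case: PQ1 => P1 Q1; case: PQ0 => P0 Q0 /= E h1 h0.
have Ei j : Dv j ((a%:P - 'X) * P1, Q1) x = Dv j ((a%:P + 'X) * P0, Q0) x.
  by apply: Dv_inv => //; rewrite -E; ring.
have d1 : (a%:P - 'X : {poly R})^`()^`() = 0 by rewrite derivB derivC derivX sub0r derivN -polyC1 derivC oppr0.
have d2 : (a%:P + 'X : {poly R})^`()^`() = 0 by rewrite derivD derivC derivX add0r -polyC1 derivC.
split.
- move=> j; have := Ei j.+1; rewrite !Dv_mulA //.
  rewrite !(derivB, derivD, derivN, derivC, derivX) !(hornerD, hornerN, hornerC, hornerX, hornerC).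
  move=> H; apply: etrans (etrans _ H) _; ring.
- have := Ei 0; rewrite !Dv_mulA0 !(hornerD, hornerN, hornerC, hornerX) => H.
  apply: etrans (etrans _ H) _; ring.
Qed.

Lemma trhoE (p q : R) j n m r0 x :
  trho p q j n m r0 x = Dv j (rho_frac p q n m r0) x / (j`!)%:R.
Proof. by []. Qed.

Lemma trho_step_gen (a x : R) (t1 t0 : nat -> R) (D1 D0 : nat -> R) :
  (forall j, t1 j = D1 j / (j`!)%:R) -> (forall j, t0 j = D0 j / (j`!)%:R) ->
  (forall j, (a - x) * D1 j.+1 - j.+1%:R * D1 j =
             (a + x) * D0 j.+1 + j.+1%:R * D0 j) ->
  (a - x) * D1 0 = (a + x) * D0 0 ->
  forall i, (a - x) * t1 i - (if i is i'.+1 then t1 i' else 0) =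
            (a + x) * t0 i + (if i is i'.+1 then t0 i' else 0).
Proof.
move=> h1 h0 E E0 [|j].
  by rewrite !subr0 !addr0 h1 h0 fact0 divr1 divr1.
rewrite !h1 !h0 factS natrM.
have n1 : (j.+1%:R : R) != 0 by rewrite pnatr_eq0.
have n2 : ((j`!)%:R : R) != 0 by rewrite pnatr_eq0 -lt0n fact_gt0.
transitivity (((a - x) * D1 j.+1 - j.+1%:R * D1 j) / (j.+1%:R * (j`!)%:R)).
  by field; rewrite n2 nat1r n1.
rewrite E; field. all: try by rewrite n2 nat1r n1.
Qed.

End P2.

Section P3.
Variable R : numClosedFieldType.

Definition ext N (x : 'I_N -> R) (c : nat) : R :=
  if insub c is Some o then x o else 0.

Lemma ext_fun N (x : 'I_N -> R) (f : nat -> R) (c : nat) :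
  (forall o : 'I_N, x o = f o) -> ext x c = if (c < N)%N then f c else 0.
Proof.
move=> h; rewrite /ext; case: insubP => [o -> <-|/negbTE ->] //; by rewrite h.
Qed.

Lemma sum_eq_nat N (x : 'I_N -> R) (c : nat) :
  \sum_(l < N) (if (l : nat) == c then x l else 0) = ext x c.
Proof.
rewrite /ext; case: insubP => [o _ <-|h].
  rewrite (bigD1 o) //= eqxx big1 ?addr0 // => l hl.
  by rewrite (inj_eq val_inj) (negbTE hl).
rewrite big1 // => l _; case: eqP => // E.
by move: h; rewrite -E ltn_ord.
Qed.

Definition eJ N : 'cV[R]_N := \col_i ((i : nat) == 0%N)%:R.

Lemma GJ_mulE N m (kap : R) (A : 'M[R]_(N, m)) i j :
  (GammaJ N kap *m A) i j =
  kap * A i j + (if (0 < i)%N then ext (fun l => A l j) i.-1 else 0).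
Proof.
rewrite !mxE.
transitivity (\sum_(l < N) ((if (l : nat) == i then kap * A l j else 0) +
   (if (l : nat) == i.-1 then (if (0 < i)%N then A l j else 0) else 0))).
  apply: eq_bigr => l _; rewrite !mxE.
  case: l => l hl; case: i => i hi /=.
  case: (eqVneq i l) => [->|ne].
    clear hi; move: hl; case: l => [|l] /=; first by move=> hl; rewrite /= addr0.
    move=> hl; have -> : (l.+1 == l) = false by lia.
    by rewrite addr0.
  rewrite add0r.
  case: (eqVneq i l.+1) => [->|ne2] /=; first by rewrite eqxx mul1r.
  rewrite mul0r; case: (eqVneq l i.-1) => // e.
  by case: i {hi} ne ne2 e => //= i; lia.
rewrite big_split /= -!sum_eq_nat; congr (_ + _).
  rewrite (bigD1 i) //= eqxx big1 ?addr0 // => l hl; by rewrite (inj_eq val_inj) (negbTE hl).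
case: (posnP i) => ip; last by [].
by rewrite big1 // => l _; case: ifP.
Qed.


Lemma GJT_mulE N m (kap : R) (A : 'M[R]_(m, N)) i j :
  (A *m (GammaJ N kap)^T) i j =
  kap * A i j + (if (0 < j)%N then ext (fun l => A i l) j.-1 else 0).
Proof.
have E : A *m (GammaJ N kap)^T = (GammaJ N kap *m A^T)^T.
  by rewrite trmx_mul trmxK.
rewrite E mxE GJ_mulE !mxE.
congr (_ + _); case: ifP => // _; rewrite /ext; case: insub => // o; by rewrite mxE.
Qed.

Lemma mulGJ_E N m (kap : R) (A : 'M[R]_(m, N)) i j :
  (A *m GammaJ N kap) i j = kap * A i j + ext (fun l => A i l) j.+1.
Proof.
rewrite !mxE.
transitivity (\sum_(l < N) ((if (l : nat) == j then kap * A i l else 0) +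
   (if (l : nat) == j.+1 then A i l else 0))).
  apply: eq_bigr => l _; rewrite !mxE.
  case: (eqVneq (l : nat) j) => [->|ne].
    have -> : ((j : nat) == j.+1) = false by lia.
    by rewrite addr0 mulrC.
  by rewrite add0r; case: ifP; rewrite ?mulr1 ?mulr0.
rewrite big_split /= -!sum_eq_nat; congr (_ + _).
rewrite (bigD1 j) //= eqxx big1 ?addr0 // => l hl; by rewrite (inj_eq val_inj) (negbTE hl).
Qed.

Lemma GJT_mulE_l N m (kap : R) (A : 'M[R]_(N, m)) i j :
  ((GammaJ N kap)^T *m A) i j = kap * A i j + ext (fun l => A l j) i.+1.
Proof.
have -> : (GammaJ N kap)^T *m A = (A^T *m GammaJ N kap)^T by rewrite trmx_mul trmxK.
rewrite mxE mulGJ_E !mxE.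
congr (_ + _); rewrite /ext; case: insub => // o; by rewrite mxE.
Qed.


Lemma ext_out N (x : 'I_N -> R) c : (N <= c)%N -> ext x c = 0.
Proof. by move=> h; rewrite /ext insubF // ltnNge h. Qed.

Lemma ext_val N (x : 'I_N -> R) (o : 'I_N) : ext x o = x o.
Proof. by rewrite /ext valK. Qed.

Lemma toep_comm N (kap : R) (T : 'M[R]_N) : ltToeplitz T ->
  GammaJ N kap *m T = T *m GammaJ N kap.
Proof.
move=> [a ha]; apply/matrixP => i j; rewrite GJ_mulE mulGJ_E; congr (_ + _).
rewrite (@ext_fun _ _ (fun l => if (j <= l)%N then a (l - j)%N else 0)); last by move=> o; rewrite ha.
rewrite (@ext_fun _ _ (fun l => if (l <= i)%N then a (i - l)%N else 0)); last by move=> o; rewrite ha.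
case: i j ha => [i hi] [j hj] ha /=.
case: (ltnP j i) => h.
- rewrite (_ : (0 < i)%N = true); last by lia.
  rewrite (_ : (i.-1 < N)%N = true); last by lia.
  rewrite (_ : (j <= i.-1)%N = true); last by lia.
  rewrite (_ : (j.+1 < N)%N = true); last by lia.
  by rewrite (_ : (i.-1 - j = i - j.+1)%N); last by lia.
- rewrite if_same; case: ifP => // hi0; case: ifP => // _.
  by rewrite (_ : (j <= i.-1)%N = false); last by lia.
Qed.


Lemma HJ_E N (d : 'rV[R]_N) (o1 o2 : 'I_N) :
  HJ d o1 o2 = ext (fun o => d 0 o) (o1 + o2).
Proof.
rewrite mxE /ext; case: insubP => [o h e|/negbTE ->] //.
rewrite h; congr (d 0 _); apply: val_inj; by rewrite val_insubd h e.
Qed.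

Lemma HJ_comm N (kap : R) (d : 'rV[R]_N) :
  HJ d *m GammaJ N kap = (GammaJ N kap)^T *m HJ d.
Proof.
apply/matrixP => i j; rewrite mulGJ_E GJT_mulE_l; congr (_ + _).
rewrite (@ext_fun _ (fun l => HJ d l j) (fun l => ext (fun o => d 0 o) (l + j))); last by move=> o /=; rewrite HJ_E.
rewrite (@ext_fun _ (fun l => HJ d i l) (fun l => ext (fun o => d 0 o) (i + l))); last by move=> o /=; rewrite HJ_E.
case: i j => [i hi] [j hj] /=.
case: (ltnP j.+1 N) => h1; case: (ltnP i.+1 N) => h2.
- by rewrite addnS addSn.
- by rewrite ext_out //; lia.
- by rewrite ext_out //; lia.
- by [].
Qed.

Lemma GDJ_eq N1 N2 (k : 'I_N1 -> R) (b : R) :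
  (forall i, k i + b != 0) ->
  diag_mx (\row_i k i) *m GDJ N2 k b + GDJ N2 k b *m (GammaJ N2 b)^T =
  const_mx 1 *m (eJ N2)^T.
Proof.
move=> hk; apply/matrixP => i j; rewrite mxE GJT_mulE mul_diag_mx.
rewrite [RHS]mxE big_ord1 !mxE mul1r.
case: j => [[|j] hj] /=.
- have := hk i; set s := k i + b => hs.
  rewrite expr1 (_ : k i = s - b); last by rewrite /s addrK.
  by field.
- rewrite (@ext_fun _ (fun l => GDJ N2 k b i l) (fun l => - ((-1) / (k i + b)) ^+ l.+1)); last by move=> o; rewrite mxE.
  rewrite (_ : (j < N2)%N = true); last by lia.
  have := hk i; set s := k i + b => hs.
  rewrite (_ : k i = s - b); last by rewrite /s addrK.
  rewrite !exprS; by field.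
Qed.


Lemma GJJ_eq N1 N2 (a b : R) : a + b != 0 ->
  GammaJ N1 a *m GJJ N1 N2 a b + GJJ N1 N2 a b *m (GammaJ N2 b)^T =
  eJ N1 *m (eJ N2)^T.
Proof.
move=> hs; apply/matrixP => i j; rewrite mxE GJ_mulE GJT_mulE.
rewrite [RHS]mxE big_ord1 !mxE.
rewrite (@ext_fun _ (fun l => GJJ N1 N2 a b l j)
  (fun l => 'C(l + j, l)%:R * (-1) ^+ (l + j) / (a + b) ^+ (l + j).+1)); last by move=> o; rewrite mxE.
rewrite (@ext_fun _ (fun l => GJJ N1 N2 a b i l)
  (fun l => 'C(i + l, i)%:R * (-1) ^+ (i + l) / (a + b) ^+ (i + l).+1)); last by move=> o; rewrite mxE.
set s := a + b in hs *.
have ha : a = s - b by rewrite /s addrK.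
rewrite ha.
case: i => [[|i] hi]; case: j => [[|j] hj] /=.
- rewrite !bin0 !expr1 !expr0; field; by rewrite ?expf_neq0 // ?hs.
- rewrite (_ : (j < N2)%N = true); last by lia.
  rewrite /= !add0n !bin0 !exprS; field; by rewrite ?expf_neq0 // ?hs.
- rewrite (_ : (i < N1)%N = true); last by lia.
  rewrite /= !addn0 !binn !exprS; field; by rewrite ?expf_neq0 // ?hs.
- rewrite (_ : (j < N2)%N = true); last by lia.
  rewrite (_ : (i < N1)%N = true); last by lia.
  rewrite (_ : (i.+1 + j.+1 = (i + j).+2)%N); last by lia.
  rewrite (_ : (i + j.+1 = (i + j).+1)%N); last by lia.
  rewrite (_ : (i.+1 + j = (i + j).+1)%N); last by lia.
  rewrite /= binS natrD !exprS; field; by rewrite ?expf_neq0 // ?hs.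
Qed.

End P3.

Section P4.
Variable R : numClosedFieldType.
Variables p q : R.

Definition nz4 (x : R) := [/\ p - x != 0, p + x != 0, q - x != 0 & q + x != 0].

Lemma trho_n n m r0 x : nz4 x -> forall i,
  (p - x) * trho p q i (n + 1) m r0 x - (if i is i'.+1 then trho p q i' (n + 1) m r0 x else 0) =
  (p + x) * trho p q i n m r0 x + (if i is i'.+1 then trho p q i' n m r0 x else 0).
Proof.
case=> h1 h2 h3 h4.
have [E E0] := Dv_step (rf_stepn p q n m r0) (rf_den (n + 1) m r0 h1 h2 h3 h4) (rf_den n m r0 h1 h2 h3 h4).
exact: (trho_step_gen (fun j => trhoE p q j (n + 1) m r0 x) (fun j => trhoE p q j n m r0 x) E E0).
Qed.

Lemma trho_m n m r0 x : nz4 x -> forall i,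
  (q - x) * trho p q i n (m + 1) r0 x - (if i is i'.+1 then trho p q i' n (m + 1) r0 x else 0) =
  (q + x) * trho p q i n m r0 x + (if i is i'.+1 then trho p q i' n m r0 x else 0).
Proof.
case=> h1 h2 h3 h4.
have [E E0] := Dv_step (rf_stepm p q n m r0) (rf_den n (m + 1) r0 h1 h2 h3 h4) (rf_den n m r0 h1 h2 h3 h4).
exact: (trho_step_gen (fun j => trhoE p q j n (m + 1) r0 x) (fun j => trhoE p q j n m r0 x) E E0).
Qed.

Lemma rJ_gen N (a : R) (x : R) (t1 t0 : nat -> R) :
  (forall i, (a - x) * t1 i - (if i is i'.+1 then t1 i' else 0) =
             (a + x) * t0 i + (if i is i'.+1 then t0 i' else 0)) ->
  (a%:M - GammaJ N x) *m (\col_(i < N) t1 i) = (a%:M + GammaJ N x) *m (\col_(i < N) t0 i).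
Proof.
move=> h; apply/matrixP => i j; rewrite (ord1 j).
rewrite mulmxBl mulmxDl !mul_scalar_mx !(GJ_mulE, mxE).
rewrite (ext_fun (x := fun l => (\col_(i0 < N) t1 i0) l 0) (f := t1)); last by move=> o; rewrite mxE.
rewrite (ext_fun (x := fun l => (\col_(i0 < N) t0 i0) l 0) (f := t0)); last by move=> o; rewrite mxE.
have := h i; case: i => [[|i] hi] /=.
  move=> e; apply: etrans (etrans _ e) _; ring.
rewrite (_ : (i < N)%N = true) /=; last by lia.
move=> e; apply: etrans (etrans _ e) _; ring.
Qed.

Lemma rJ_step_n N n m r0 x : nz4 x ->
  (p%:M - GammaJ N x) *m rJ p q N (n + 1) m r0 x = (p%:M + GammaJ N x) *m rJ p q N n m r0 x.
Proof.
move=> h; apply: (@rJ_gen N p x (fun i => trho p q i (n + 1) m r0 x)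
  (fun i => trho p q i n m r0 x)); exact: trho_n.
Qed.

Lemma rJ_step_m N n m r0 x : nz4 x ->
  (q%:M - GammaJ N x) *m rJ p q N n (m + 1) r0 x = (q%:M + GammaJ N x) *m rJ p q N n m r0 x.
Proof.
move=> h; apply: (@rJ_gen N q x (fun i => trho p q i n (m + 1) r0 x)
  (fun i => trho p q i n m r0 x)); exact: trho_m.
Qed.

Lemma rho_n n m r0 x : nz4 x ->
  (p - x) * rho p q (n + 1) m r0 x = (p + x) * rho p q n m r0 x.
Proof.
case=> h1 h2 h3 h4; rewrite /rho.
have u : (p + x) / (p - x) != 0 by rewrite mulf_neq0 ?invr_eq0.
rewrite expfzDr // expr1z.
field; by [].
Qed.

Lemma rho_m n m r0 x : nz4 x ->
  (q - x) * rho p q n (m + 1) r0 x = (q + x) * rho p q n m r0 x.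
Proof.
case=> h1 h2 h3 h4; rewrite /rho.
have u : (q + x) / (q - x) != 0 by rewrite mulf_neq0 ?invr_eq0.
rewrite expfzDr // expr1z.
field; by [].
Qed.

Lemma rD_gen N1 (a : R) (k : 'I_N1 -> R) (t1 t0 : 'I_N1 -> R) :
  (forall i, (a - k i) * t1 i = (a + k i) * t0 i) ->
  (a%:M - GammaD k) *m (\col_i t1 i) = (a%:M + GammaD k) *m (\col_i t0 i).
Proof.
move=> h; apply/matrixP => i j; rewrite (ord1 j).
rewrite mulmxBl mulmxDl !mul_scalar_mx /GammaD !mul_diag_mx !mxE.
move: (h i); move=> e; apply: etrans (etrans _ e) _; ring.
Qed.

Lemma FJ_eJ N n m r0 x : FJ p q N n m r0 x *m eJ R N = rJ p q N n m r0 x.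
Proof.
apply/matrixP => i j; rewrite (ord1 j) !mxE.
transitivity (\sum_(l < N) (if (l : nat) == 0%N then FJ p q N n m r0 x i l else 0)).
  by apply: eq_bigr => l _; rewrite !mxE; case: (_ == 0%N); rewrite ?mulr1 ?mulr0.
rewrite sum_eq_nat (ext_fun (f := fun l => if (l <= i)%N then trho p q (i - l) n m r0 x else 0)); last by move=> o; rewrite mxE.
by rewrite (_ : (0 < N)%N = true) ?subn0 //; case: i => i /=; lia.
Qed.

Lemma eJ_HJ N (d : 'rV[R]_N) : (eJ R N)^T *m HJ d = d.
Proof.
apply/matrixP => i j; rewrite (ord1 i) !mxE.
transitivity (\sum_(l < N) (if (l : nat) == 0%N then HJ d l j else 0)).
  by apply: eq_bigr => l _; rewrite !mxE; case: (_ == 0%N); rewrite ?mul1r ?mul0r.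
rewrite sum_eq_nat (ext_fun (f := fun l => ext (fun o => d 0 o) (l + j))); last by move=> o; rewrite HJ_E.
by rewrite (_ : (0 < N)%N = true) ?add0n ?ext_val //; case: j => j /=; lia.
Qed.

End P4.

Section Blk.
Variable R : numClosedFieldType.

Lemma mxdiag_mul s1 (Ns : 'I_s1 -> nat) (A B : forall j, 'M[R]_(Ns j)) :
  \mxdiag_j A j *m \mxdiag_j B j = \mxdiag_j (A j *m B j).
Proof.
rewrite {1}/mxdiag mul_mxblock_mxdiag /mxdiag; apply: eq_mxblock => i j.
by case: eqVneq => [<-|_]; rewrite ?conform_mx_id ?mul0mx.
Qed.

Lemma blk_mul_col N1 s1 (Ns : 'I_s1 -> nat) (A : 'M[R]_N1) (B : forall j, 'M[R]_(Ns j))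
  (u : 'cV[R]_N1) (v : forall j, 'cV[R]_(Ns j)) :
  block_mx A 0 0 (\mxdiag_j B j) *m col_mx u (\mxcol_j v j) =
  col_mx (A *m u) (\mxcol_j (B j *m v j)).
Proof. by rewrite mul_block_col !mul0mx addr0 add0r mul_mxdiag_mxcol. Qed.

Lemma blk_sub N1 s1 (Ns : 'I_s1 -> nat) (a : R) (A : 'M[R]_N1) (B : forall j, 'M[R]_(Ns j)) :
  a%:M - block_mx A 0 0 (\mxdiag_j B j) =
  block_mx (a%:M - A) 0 0 (\mxdiag_j (a%:M - B j)).
Proof.
rewrite (scalar_mx_block N1) opp_block_mx add_block_mx oppr0 addr0 mxdiagB mxdiagZ.
by rewrite subrr.
Qed.

Lemma blk_add N1 s1 (Ns : 'I_s1 -> nat) (a : R) (A : 'M[R]_N1) (B : forall j, 'M[R]_(Ns j)) :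
  a%:M + block_mx A 0 0 (\mxdiag_j B j) =
  block_mx (a%:M + A) 0 0 (\mxdiag_j (a%:M + B j)).
Proof.
rewrite (scalar_mx_block N1) add_block_mx !addr0 mxdiagD mxdiagZ. by [].
Qed.

Lemma blk_mul N1 s1 (Ns : 'I_s1 -> nat) (A A' : 'M[R]_N1) (B B' : forall j, 'M[R]_(Ns j)) :
  block_mx A 0 0 (\mxdiag_j B j) *m block_mx A' 0 0 (\mxdiag_j B' j) =
  block_mx (A *m A') 0 0 (\mxdiag_j (B j *m B' j)).
Proof.
by rewrite mulmx_block !mul0mx !mulmx0 !addr0 add0r mxdiag_mul.
Qed.

End Blk.

Section Main.
Variable R : numClosedFieldType.
Variables (p q : R) (N1 s1 : nat) (Ns : 'I_s1 -> nat).
Variables (k : 'I_N1 -> R) (kap : 'I_s1 -> R) (rho0D : 'I_N1 -> R) (rho0J : 'I_s1 -> R).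
Variables (c1 : 'rV[R]_N1) (cJ : forall j, 'rV[R]_(Ns j)).

Local Notation Ga := (Gamma Ns k kap).

Definition ev : 'cV[R]_(N1 + \sum_j Ns j) :=
  col_mx (const_mx 1) (\mxcol_j eJ R (Ns j)).

Lemma GaT : Ga^T = block_mx (GammaD k) 0 0 (\mxdiag_j (GammaJ (Ns j) (kap j))^T).
Proof. by rewrite /Gamma tr_block_mx !trmx0 /GammaD tr_diag_mx tr_mxdiag. Qed.

Lemma comm_F n m : Ga *m Fmat p q Ns k kap rho0D rho0J n m = Fmat p q Ns k kap rho0D rho0J n m *m Ga.
Proof.
rewrite /Gamma /Fmat !blk_mul; congr block_mx.
  by rewrite /GammaD /FD diag_mxC.
apply/eq_mxdiag => j; apply: toep_comm.
by exists (fun l => trho p q l n m (rho0J j) (kap j)) => a b; rewrite mxE.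
Qed.

Lemma comm_H : Hmat c1 cJ *m Ga = Ga^T *m Hmat c1 cJ.
Proof.
rewrite GaT /Hmat /Gamma !blk_mul; congr block_mx.
  by rewrite /GammaD /HD diag_mxC.
by apply/eq_mxdiag => j; apply: HJ_comm.
Qed.

Lemma Fe n m : Fmat p q Ns k kap rho0D rho0J n m *m ev = rvec p q Ns k kap rho0D rho0J n m.
Proof.
rewrite /Fmat /ev blk_mul_col /rvec; congr col_mx.
  by apply/matrixP => i j; rewrite /FD mul_diag_mx !mxE mulr1.
by apply/eq_mxcol => j; apply: FJ_eJ.
Qed.

Lemma eH : ev^T *m Hmat c1 cJ = cvec c1 cJ.
Proof.
rewrite /ev tr_col_mx tr_mxcol /Hmat mul_row_block !mulmx0 addr0 add0r.
rewrite mul_mxrow_mxdiag /cvec; congr row_mx.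
  by apply/matrixP => i j; rewrite /HD mul_mx_diag !mxE mul1r (ord1 i).
by apply/eq_mxrow => j; apply: eJ_HJ.
Qed.

Hypothesis hkk : forall i j, k i + k j != 0.
Hypothesis hkK : forall i j, k i + kap j != 0.
Hypothesis hKK : forall i j, kap i + kap j != 0.

Lemma TRlem : GammaD k *m (\mxrow_j GDJ (Ns j) k (kap j)) +
  (\mxrow_j GDJ (Ns j) k (kap j)) *m (\mxdiag_j (GammaJ (Ns j) (kap j))^T) =
  const_mx 1 *m (\mxcol_j eJ R (Ns j))^T.
Proof.
rewrite tr_mxcol mul_mxrow mul_mxrow_mxdiag mul_mxrow -mxrowD.
by apply/eq_mxrow => j; apply: GDJ_eq.
Qed.

Lemma Geq : Ga *m Gmat Ns k kap + Gmat Ns k kap *m Ga^T = ev *m ev^T.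
Proof.
rewrite GaT /Gamma /Gmat !mulmx_block !mul0mx !mulmx0 !addr0 !add0r add_block_mx.
rewrite /ev tr_col_mx mul_col_row; congr block_mx.
- apply/matrixP => i j; rewrite mxE /GammaD mul_diag_mx mul_mx_diag !mxE big_ord1 !mxE.
  by field; rewrite hkk.
- exact: TRlem.
- have := congr1 trmx TRlem; rewrite raddfD /= !trmx_mul !trmxK /GammaD tr_diag_mx.
  have -> : (\mxdiag_j (GammaJ (Ns j) (kap j))^T)^T = \mxdiag_j (GammaJ (Ns j) (kap j)).
    by rewrite tr_mxdiag; apply/eq_mxdiag => j; rewrite trmxK.
  by move=> E; rewrite addrC.
- rewrite tr_mxcol mul_mxcol_mxrow mul_mxdiag_mxblock mul_mxblock_mxdiag -mxblockD.
  apply/eq_mxblock => i j; case: ifP => _; first exact: GJJ_eq (hKK i j).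
  have := congr1 trmx (GJJ_eq (Ns j) (Ns i) (hKK j i)).
  by rewrite raddfD /= !trmx_mul !trmxK addrC.
Qed.

Lemma Meq n m :
  Mmat p q k kap rho0D rho0J c1 cJ n m *m Ga + Ga *m Mmat p q k kap rho0D rho0J c1 cJ n m =
  rvec p q Ns k kap rho0D rho0J n m *m cvec c1 cJ.
Proof.
rewrite /Mmat.
set F := Fmat _ _ _ _ _ _ _ n m; set G := Gmat _ _ _; set H := Hmat _ _.
have h1 : F *m G *m H *m Ga = F *m (G *m Ga^T) *m H.
  by rewrite -[F *m G *m H *m Ga]mulmxA comm_H !mulmxA.
have h2 : Ga *m (F *m G *m H) = F *m (Ga *m G) *m H.
  by rewrite !mulmxA comm_F.
rewrite h1 h2 -mulmxDl -mulmxDr addrC Geq.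
by rewrite !mulmxA Fe -mulmxA eH.
Qed.

End Main.

Section Fin.
Variable R : numClosedFieldType.
Variables (p q : R) (N1 s1 : nat) (Ns : 'I_s1 -> nat).
Variables (k : 'I_N1 -> R) (kap : 'I_s1 -> R) (rho0D : 'I_N1 -> R) (rho0J : 'I_s1 -> R).

Lemma eJT_GJ N (x : R) : (eJ R N)^T *m GammaJ N x = x *: (eJ R N)^T.
Proof.
apply/matrixP => a b; rewrite mulGJ_E !mxE.
rewrite (ext_fun (f := fun l => ((l : nat) == 0%N)%:R)); last by move=> o; rewrite !mxE.
by rewrite if_same addr0 mulrC.
Qed.

Lemma eig_k i : eigenvalue (Gamma Ns k kap) (k i).
Proof.
apply/eigenvalueP; exists (row_mx (delta_mx 0 i) 0).
  rewrite /Gamma mul_row_block !mulmx0 !mul0mx !addr0 scale_row_mx scaler0; congr row_mx.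
  apply/matrixP => a b; rewrite /GammaD mul_mx_diag !mxE (ord1 a) eqxx /=.
  by case: eqP => [<-|_]; rewrite ?mul1r ?mulr1 ?mul0r ?mulr0.
rewrite row_mx_eq0 negb_and; apply/orP; left; apply/eqP => /matrixP /(_ 0 i).
rewrite !mxE !eqxx /=; apply/eqP; exact: oner_neq0.
Qed.

Hypothesis HNs : forall j, (0 < Ns j)%N.

Lemma eig_kap j : eigenvalue (Gamma Ns k kap) (kap j).
Proof.
pose B l : 'rV[R]_(Ns l) := if l == j then (eJ R (Ns l))^T else 0.
apply/eigenvalueP; exists (row_mx 0 (\mxrow_l B l)).
  rewrite /Gamma mul_row_block !mulmx0 !mul0mx ?add0r ?addr0 mul_mxrow_mxdiag scale_row_mx scaler0.
  congr row_mx.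
  have -> : \mxrow_l (B l *m GammaJ (Ns l) (kap l)) = \mxrow_l (kap j *: B l).
    apply/eq_mxrow => l; rewrite /B; case: eqP => [->|_]; first exact: eJT_GJ.
    by rewrite mul0mx scaler0.
  by apply/matrixP => a b; rewrite !mxE.
rewrite row_mx_eq0 negb_and; apply/orP; right; apply/negP => /eqP h.
have := congr1 (fun M => submxrow M j) h; rewrite mxrowK submxrow0 /B eqxx.
move/matrixP => /(_ 0 (Ordinal (HNs j))); rewrite !mxE /= => /eqP; by rewrite oner_eq0.
Qed.

End Fin.

Theorem theorem3 (R : numClosedFieldType) (p q : R)
  (N1 s1 : nat) (Ns : 'I_s1 -> nat) (HNs : forall j, (0 < Ns j)%N)
  (k : 'I_N1 -> R) (kap : 'I_s1 -> R)
  (rho0D : 'I_N1 -> R) (rho0J : 'I_s1 -> R)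
  (c1 : 'rV[R]_N1) (cJ : forall j, 'rV[R]_(Ns j))
  (Heig : forall lam mu : R,
      eigenvalue (Gamma Ns k kap) lam ->
      eigenvalue (Gamma Ns k kap) mu -> lam + mu != 0)
  (Hpq : forall lam : R, eigenvalue (Gamma Ns k kap) lam ->
      [/\ p != lam, p != - lam, q != lam & q != - lam]) :
  let Ga := Gamma Ns k kap in
  let r := rvec p q Ns k kap rho0D rho0J in
  let M := @Mmat R p q N1 s1 Ns k kap rho0D rho0J c1 cJ in
  let c := @cvec R N1 s1 Ns c1 cJ in
  (forall n m : int,
     [/\ (p%:M - Ga) *m r (n + 1) m = (p%:M + Ga) *m r n m,
         (q%:M - Ga) *m r n (m + 1) = (q%:M + Ga) *m r n m
       & M n m *m Ga + Ga *m M n m = r n m *m c]) /\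
  (forall AJ : forall j, 'M[R]_(Ns j), (forall j, ltToeplitz (AJ j)) ->
   let A := @Amat R N1 s1 Ns AJ in
   forall n m : int,
     [/\ (p%:M - Ga) *m (A *m r (n + 1) m) = (p%:M + Ga) *m (A *m r n m),
         (q%:M - Ga) *m (A *m r n (m + 1)) = (q%:M + Ga) *m (A *m r n m)
       & (A *m M n m) *m Ga + Ga *m (A *m M n m) = (A *m r n m) *m c]).
Proof.
move=> Ga r M c.
have nz : forall x, eigenvalue Ga x -> nz4 p q x.
  move=> x /Hpq [h1 h2 h3 h4]; split.
  - by rewrite subr_eq0.
  - by rewrite addr_eq0.
  - by rewrite subr_eq0.
  - by rewrite addr_eq0.
have hkk i j : k i + k j != 0 by apply: Heig; apply: eig_k.
have hkK i j : k i + kap j != 0 by apply: Heig; [apply: eig_k | apply: eig_kap].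
have hKK i j : kap i + kap j != 0 by apply: Heig; apply: eig_kap.
have stn n m : (p%:M - Ga) *m r (n + 1) m = (p%:M + Ga) *m r n m.
  rewrite /Ga /r /Gamma blk_sub blk_add /rvec !blk_mul_col; congr col_mx.
    apply: (@rD_gen _ N1 p k (fun i => rho p q (n + 1) m (rho0D i) (k i))
                          (fun i => rho p q n m (rho0D i) (k i))) => i.
    by apply: rho_n; apply: nz; apply: eig_k.
  apply/eq_mxcol => j; apply: rJ_step_n; apply: nz; exact: eig_kap.
have stm n m : (q%:M - Ga) *m r n (m + 1) = (q%:M + Ga) *m r n m.
  rewrite /Ga /r /Gamma blk_sub blk_add /rvec !blk_mul_col; congr col_mx.
    apply: (@rD_gen _ N1 q k (fun i => rho p q n (m + 1) (rho0D i) (k i))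
                          (fun i => rho p q n m (rho0D i) (k i))) => i.
    by apply: rho_m; apply: nz; apply: eig_k.
  apply/eq_mxcol => j; apply: rJ_step_m; apply: nz; exact: eig_kap.
have mq n m : M n m *m Ga + Ga *m M n m = r n m *m c by apply: Meq.
split; first by move=> n m; split.
move=> AJ hT A n m.
have hA : A *m Ga = Ga *m A.
  rewrite /A /Amat /Ga /Gamma !blk_mul mul1mx mulmx1; congr block_mx.
  by apply/eq_mxdiag => j; rewrite toep_comm.
have cA (a : R) : (a%:M - Ga) *m A = A *m (a%:M - Ga).
  by rewrite mulmxBl mulmxBr scalar_mxC hA.
have cA' (a : R) : (a%:M + Ga) *m A = A *m (a%:M + Ga).
  by rewrite mulmxDl mulmxDr scalar_mxC hA.
split.
- by rewrite mulmxA cA -mulmxA stn mulmxA -cA' -mulmxA.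
- by rewrite mulmxA cA -mulmxA stm mulmxA -cA' -mulmxA.
- by rewrite -mulmxA (mulmxA Ga) -hA -mulmxA -mulmxDr mq mulmxA.
Qed.
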